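(* Let $\{\alpha_n\}_{n\ge0}$ be a sequence in the open unit disk $\mathbb{D}$, $\rho_n=\sqrt{1-|\alpha_n|^2}$, and for $z\in\partial\mathbb{D}$ let $S_n(z)=\rho_{n-1}^{-1}\begin{pmatrix} z & -\overline{\alpha_{n-1}}\\ -z\alpha_{n-1} & 1\end{pmatrix}$ ($n\ge1$), $T_n(z)=S_n(z)S_{n-1}(z)\cdots S_1(z)$, $T_0(z)=I$. Define $\begin{pmatrix}\varphi_n(z)\\ \varphi_n^\dagger(z)\end{pmatrix}=T_n(z)\begin{pmatrix}1\\1\end{pmatrix}$ and $\begin{pmatrix}\psi_n(z)\\ \psi_n^\dagger(z)\end{pmatrix}=T_n(z)\begin{pmatrix}1\\-1\end{pmatrix}$. Let $z,z'\in\partial\mathbb{D}$ and let $\vec w_n=\begin{pmatrix}w_n\\ w_n^\dagger\end{pmatrix}=T_n(z)\vec w_0$ and $\vec w'_n=\begin{pmatrix}w'_n\\ w'^\dagger_n\end{pmatrix}=T_n(z')\vec w'_0$ with $\vec w_0=\vec w'_0$. Then for every $n\ge0$, $$w'_n=w_n+(z'-z)\sum_{m=0}^{n-1}\frac{1}{2z^{m+1}}\big(\varphi_m^\dagger(z)\psi_n(z)-\varphi_n(z)\psi_m^\dagger(z)\big)w'_m$$ and $$w'^\dagger_n=w_n^\dagger+(z'-z)\sum_{m=0}^{n-1}\frac{1}{2z^{m+1}}\big(\varphi_m^\dagger(z)\psi_n^\dagger(z)-\varphi_n^\dagger(z)\psi_m^\dagger(z)\big)w'_m.$$ *)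

(* Defs.v *)
From HB Require Import structures.
From mathcomp Require Import all_boot all_order all_algebra.
From mathcomp Require Import complex.
Set Implicit Arguments. Unset Strict Implicit. Unset Printing Implicit Defensive.
Import Order.TTheory GRing.Theory Num.Theory.
Local Open Scope ring_scope.

Section Szego.
Variable R : rcfType.
Local Notation C := (R[i]).

Definition rho (a : C) : C := sqrtC (1 - `|a| ^+ 2).

Definition mx2 (a b c d : C) : 'M[C]_2 :=
  \matrix_(i < 2, j < 2)
    if i == ord0 then (if j == ord0 then a else b) else (if j == ord0 then c else d).
Definition col2 (a b : C) : 'cV[C]_2 := \col_(i < 2) (if i == ord0 then a else b).

Definition Smat (alpha : nat -> C) (n : nat) (z : C) : 'M[C]_2 :=
  (rho (alpha n.-1))^-1 *: mx2 z (- (alpha n.-1)^*) (- z * alpha n.-1) 1.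

Fixpoint Tmat (alpha : nat -> C) (n : nat) (z : C) : 'M[C]_2 :=
  match n with
  | 0 => 1%:M
  | m.+1 => Smat alpha m.+1 z *m Tmat alpha m z
  end.

Definition top (v : 'cV[C]_2) : C := v ord0 ord0.
Definition bot (v : 'cV[C]_2) : C := v ord_max ord0.

Definition phi  alpha n z := top (Tmat alpha n z *m col2 1 1).
Definition phid alpha n z := bot (Tmat alpha n z *m col2 1 1).
Definition psi  alpha n z := top (Tmat alpha n z *m col2 1 (-1)).
Definition psid alpha n z := bot (Tmat alpha n z *m col2 1 (-1)).

End Szego.

(* Main.v *)
Require Import Defs.
From HB Require Import structures.
From mathcomp Require Import all_boot all_order all_algebra.
From mathcomp Require Import complex.
From mathcomp Require Import ring.
Import Order.TTheory GRing.Theory Num.Theory.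
Local Open Scope ring_scope.

Section H.
Variable R : rcfType.
Local Notation C := (R[i]).

Lemma rho_sq (a : C) : `|a| < 1 -> rho a ^+ 2 = 1 - a * a^* /\ rho a != 0.
Proof.
move=> ha; rewrite /rho sqrtCK -normCK; split => //.
rewrite sqrtC_eq0 subr_eq0 eq_sym; rewrite lt_eqF //.
by rewrite expr_lt1 // normr_ge0.
Qed.

Lemma mulmx2E (M : 'M[C]_2) (v : 'cV[C]_2) :
  top (M *m v) = M ord0 ord0 * top v + M ord0 ord_max * bot v /\
  bot (M *m v) = M ord_max ord0 * top v + M ord_max ord_max * bot v.
Proof.
have E : lift ord0 ord0 = ord_max :> 'I_2 by apply/val_inj.
by rewrite /top /bot !mxE !big_ord_recl !big_ord0 !addr0 E.
Qed.

Lemma cv2_eq (u v : 'cV[C]_2) : top u = top v -> bot u = bot v -> u = v.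
Proof.
move=> h1 h2; apply/matrixP => i j; rewrite (ord1 j).
case: i => [[|[|i]] Hi] //.
- by rewrite (_ : Ordinal Hi = ord0) //; apply/val_inj.
- by rewrite (_ : Ordinal Hi = ord_max) //; apply/val_inj.
Qed.


Lemma col2E (a b : C) : top (col2 a b) = a /\ bot (col2 a b) = b.
Proof. by rewrite /top /bot !mxE. Qed.

Lemma linE (k : C) (u v : 'cV[C]_2) :
  [/\ top (u + v) = top u + top v, bot (u + v) = bot u + bot v,
      top (u - v) = top u - top v, bot (u - v) = bot u - bot v &
      top (k *: u) = k * top u /\ bot (k *: u) = k * bot u].
Proof. by rewrite /top /bot !mxE. Qed.

Lemma topD (u v : 'cV[C]_2) : top (u + v) = top u + top v. Proof. by rewrite /top !mxE. Qed.
Lemma botD (u v : 'cV[C]_2) : bot (u + v) = bot u + bot v. Proof. by rewrite /bot !mxE. Qed.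
Lemma topZ k (u : 'cV[C]_2) : top (k *: u) = k * top u. Proof. by rewrite /top !mxE. Qed.
Lemma botZ k (u : 'cV[C]_2) : bot (k *: u) = k * bot u. Proof. by rewrite /bot !mxE. Qed.

Lemma topS n (F : 'I_n -> 'cV[C]_2) : top (\sum_(m < n) F m) = \sum_(m < n) top (F m).
Proof. by rewrite /top summxE. Qed.
Lemma botS n (F : 'I_n -> 'cV[C]_2) : bot (\sum_(m < n) F m) = \sum_(m < n) bot (F m).
Proof. by rewrite /bot summxE. Qed.

Lemma SmatE (alpha : nat -> C) k z (v : 'cV[C]_2) :
  let a := alpha k.-1 in let r := (rho a)^-1 in
  top (Smat alpha k z *m v) = r * (z * top v - a^* * bot v) /\
  bot (Smat alpha k z *m v) = r * (- z * a * top v + bot v).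
Proof.
move=> a r; have [-> ->] := mulmx2E (Smat alpha k z) v.
rewrite /Smat /mx2 !mxE /=.
rewrite {}/r {}/a; split.
- by rewrite mulrBr !mulrN !mulNr !mulrA.
- by rewrite mulr1 mulrDr !mulrA.
Qed.

Definition brk (u v : 'cV[C]_2) := top u * bot v - bot u * top v.

Lemma brk_S (alpha : nat -> C) k z u v : `|alpha k.-1| < 1 ->
  brk (Smat alpha k z *m u) (Smat alpha k z *m v) = z * brk u v.
Proof.
move=> ha; have [h1 h2] := rho_sq _ ha.
rewrite /brk; have [-> ->] := SmatE alpha k z u; have [-> ->] := SmatE alpha k z v.
move: h1 h2; set a := alpha k.-1; set r := rho a; clearbody r a => h1 h2.
transitivity ((r^-1 * r) ^+ 2 * z * (top u * bot v - bot u * top v)); last first.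
  by rewrite mulVf // expr1n mul1r.
rewrite exprMn h1; clear h1 h2 ha.
move: (r^-1) (top u) (bot u) (top v) (bot v) z a => x1 x2 x3 x4 x5 x6 x7; ring.
Qed.

Lemma brk_T (alpha : nat -> C) (Ha : forall n, `|alpha n| < 1) n z u v :
  brk (Tmat alpha n z *m u) (Tmat alpha n z *m v) = z ^+ n * brk u v.
Proof.
elim: n => [|n IH] /=; first by rewrite !mul1mx expr0 mul1r.
by rewrite -!mulmxA brk_S // IH exprS mulrA.
Qed.


Section Main.
Variables (alpha : nat -> C) (Ha : forall n, `|alpha n| < 1) (z z' : C) (Hz : z != 0).

Definition vv m := phid alpha m z *: col2 1 (-1) - psid alpha m z *: col2 1 1.

Lemma Tv n m : top (Tmat alpha n z *m vv m) = phid alpha m z * psi alpha n z - psid alpha m z * phi alpha n z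
  /\ bot (Tmat alpha n z *m vv m) = phid alpha m z * psid alpha n z - psid alpha m z * phid alpha n z.
Proof.
rewrite /vv mulmxBr -!scalemxAr.
have [_ _ -> -> _] := linE 1 (phid alpha m z *: (Tmat alpha n z *m col2 1 (-1)))
   (psid alpha m z *: (Tmat alpha n z *m col2 1 1)).
have [_ _ _ _ [-> ->]] := linE (phid alpha m z) (Tmat alpha n z *m col2 1 (-1)) 0.
have [_ _ _ _ [-> ->]] := linE (psid alpha m z) (Tmat alpha n z *m col2 1 1) 0.
by [].
Qed.

Lemma Tvn n : Tmat alpha n z *m vv n = (2 * z ^+ n) *: col2 1 0.
Proof.
have h := brk_T _ Ha n z (col2 1 1) (col2 1 (-1)).
rewrite /brk in h.
have [t1 b1] := col2E 1 1; have [t2 b2] := col2E 1 (-1).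
rewrite t1 b1 t2 b2 in h.
have [ht hb] := Tv n n.
apply: cv2_eq.
- rewrite ht.
  have [_ _ _ _ [-> _]] := linE (2 * z ^+ n) (col2 1 0) 0.
  have [-> _] := col2E (1 : C) 0.
  move: h; rewrite /phi /phid /psi /psid.
  move: (top _) (bot _) (top _) (bot _) => x1 x2 x3 x4 h.
  transitivity (- (x3 * x4 - x2 * x1)); first by ring.
  rewrite h; ring.
- rewrite hb.
  have [_ _ _ _ [_ ->]] := linE (2 * z ^+ n) (col2 1 0) 0.
  have [_ ->] := col2E (1 : C) 0.
  by rewrite mulrC subrr mulr0.
Qed.

Lemma Sz' k (x : 'cV[C]_2) : Smat alpha k z' *m x =
  Smat alpha k z *m x + ((z' - z) / z * top x) *: (Smat alpha k z *m col2 1 0).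
Proof.
have [ea eb] := SmatE alpha k z' x.
have [fa fb] := SmatE alpha k z x.
have [ga gb] := SmatE alpha k z (col2 1 0).
have [t1 b1] := col2E (1 : C) 0.
apply: cv2_eq.
- rewrite topD topZ ea fa ga t1 b1.
  have [_ hq] := rho_sq _ (Ha k.-1).
  by field; rewrite hq Hz.
- rewrite botD botZ eb fb gb t1 b1.
  have [_ hq] := rho_sq _ (Ha k.-1).
  by field; rewrite hq Hz.
Qed.

Variable w0 : 'cV[C]_2.
Definition XX n := \sum_(m < n) ((z' - z) * (2 * z ^+ m.+1)^-1 * top (Tmat alpha m z' *m w0)) *: vv m.

Lemma main_vec n : Tmat alpha n z' *m w0 = Tmat alpha n z *m w0 + Tmat alpha n z *m XX n.
Proof.
elim: n => [|n IH]; first by rewrite /XX big_ord0 mulmx0 addr0.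
rewrite /= -!mulmxA Sz' {1}IH /XX big_ord_recr /= -/(XX n) !mulmxDr -addrA.
congr (_ + (_ + _)).
rewrite -!scalemxAr Tvn -scalemxAr scalerA; congr (_ *: _).
have hy : z ^+ n != 0 by rewrite expf_neq0.
rewrite exprS; move: (z ^+ n) hy (top _) => y hy t.
by field; rewrite hy Hz.
Qed.
End Main.
End H.

Theorem mainTheorem3 (R : rcfType) (alpha : nat -> R[i])
  (Halpha : forall n, `|alpha n| < 1)
  (z z' : R[i]) (Hz : `|z| = 1) (Hz' : `|z'| = 1)
  (w0 : 'cV[R[i]]_2) (n : nat) :
  let w  := fun m => Tmat alpha m z  *m w0 in
  let w' := fun m => Tmat alpha m z' *m w0 in
  top (w' n) = top (w n) + (z' - z) * \sum_(m < n)
      (2 * z ^+ m.+1)^-1 *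
      (phid alpha m z * psi alpha n z - phi alpha n z * psid alpha m z) * top (w' m)
  /\
  bot (w' n) = bot (w n) + (z' - z) * \sum_(m < n)
      (2 * z ^+ m.+1)^-1 *
      (phid alpha m z * psid alpha n z - phid alpha n z * psid alpha m z) * top (w' m).
Proof.
move=> w w'.
have hz0 : z != 0.
  apply/eqP => h; move: Hz; rewrite h normr0 => /eqP; by rewrite eq_sym oner_eq0.
have hv := @main_vec R alpha Halpha z z' hz0 w0 n.
rewrite /w /w' hv topD botD /XX mulmx_sumr topS botS !big_distrr /=; split; congr (_ + _);
  apply: eq_bigr => m _; rewrite -scalemxAr ?topZ ?botZ.
- rewrite (@Tv R alpha z n m).1; ring.
- rewrite (@Tv R alpha z n m).2; ring.
Qed.
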